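(* Let $\mathscr{B}$ be a minimal balanced collection on $N$ and $S'\in\mathscr{B}$. Let $z\in\mathbb{R}^N_+$ with $z\neq\mathbf{1}^{S'}$ and $z_i>0$ if and only if $i\in S'$, and let $Z=\{\mathbf{1}^S\mid S\in\mathscr{B}\setminus\{S'\}\}\cup\{z\}$. If $Z$ is a minimal balanced set, then (a) there exists a vector $y$ in the orthogonal complement of $\mathrm{span}\{\mathbf{1}^S\mid S\in\mathscr{B}\setminus\{S'\}\}$ with $z\cdot y\neq0$, and (b) $z\in\mathrm{span}\{\mathbf{1}^S\mid S\in\mathscr{B}\}$.
   Context: $\mathbf{1}^S\in\mathbb{R}^N$ is the characteristic vector of $S\subseteq N$, $\mathbb{R}^N_+$ the nonnegative orthant. A collection $\mathscr{B}$ of nonempty subsets of $N$ is balanced if there exist positive weights $(\lambda_S)$ with $\sum_{S\in\mathscr{B}}\lambda_S\mathbf{1}^S=\mathbf{1}^N$, and minimal if no proper subcollection is balanced. A finite set $Z\subseteq\mathbb{R}^N_+\setminus\{0\}$ is a balanced set if there exist positive weights $(\delta_w)_{w\in Z}$ with $\sum_{w\in Z}\delta_w w=\mathbf{1}^N$; it is a minimal balanced set if no proper subset of $Z$ is balanced. *)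

(* Defs.v *)
From HB Require Import structures.
From mathcomp Require Import all_boot all_order all_algebra.
From mathcomp Require Import finmap.
Set Implicit Arguments. Unset Strict Implicit. Unset Printing Implicit Defensive.
Import Order.TTheory GRing.Theory Num.Theory.
Local Open Scope ring_scope.
Local Open Scope fset_scope.

Section Defs.
Variables (R : realFieldType) (n : nat).
(* N = 'I_n, vectors of R^N are row vectors 'rV[R]_n *)

Definition chi (S : {set 'I_n}) : 'rV[R]_n :=
  \row_i (if i \in S then 1 else 0).

Definition dotv (x y : 'rV[R]_n) : R := \sum_i x 0 i * y 0 i.

Definition nonneg_vec (w : 'rV[R]_n) : Prop := forall i, 0 <= w 0 i.

Definition balanced_coll (B : {set {set 'I_n}}) : Prop :=
  (forall S, S \in B -> S != set0) /\
  exists lam : {set 'I_n} -> R,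
    (forall S, S \in B -> 0 < lam S) /\
    \sum_(S in B) lam S *: chi S = chi setT.

Definition minimal_balanced_coll (B : {set {set 'I_n}}) : Prop :=
  balanced_coll B /\ forall C : {set {set 'I_n}}, C \proper B -> ~ balanced_coll C.

Definition balanced_set (Z : {fset 'rV[R]_n}) : Prop :=
  (forall w, w \in Z -> nonneg_vec w /\ w != 0) /\
  exists delta : 'rV[R]_n -> R,
    (forall w, w \in Z -> 0 < delta w) /\
    \sum_(w <- Z) delta w *: w = chi setT.

Definition minimal_balanced_set (Z : {fset 'rV[R]_n}) : Prop :=
  balanced_set Z /\ forall Z' : {fset 'rV[R]_n}, Z' `<` Z -> ~ balanced_set Z'.

Definition in_span (C : {set {set 'I_n}}) (v : 'rV[R]_n) : Prop :=
  exists lam : {set 'I_n} -> R, v = \sum_(S in C) lam S *: chi S.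

Definition in_orth_compl (C : {set {set 'I_n}}) (y : 'rV[R]_n) : Prop :=
  forall v, in_span C v -> dotv v y = 0.

End Defs.

(* Main.v *)
Require Import Defs.
From HB Require Import structures.
From mathcomp Require Import all_boot all_order all_algebra finmap.
Import Order.TTheory GRing.Theory Num.Theory.
Local Open Scope ring_scope.
Local Open Scope fset_scope.
Section S.
Variables (R : realFieldType) (n : nat).
Implicit Types (C : {set {set 'I_n}}).

Lemma chi_inj : injective (@chi R n).
Proof.
move=> S T e; apply/setP=> i.
have := congr1 (fun v : 'rV[R]_n => v 0 i) e; rewrite /chi !mxE.
by case: (i \in S); case: (i \in T) => //= /eqP; rewrite ?oner_eq0 // eq_sym oner_eq0.
Qed.

Lemma sum_imchi C (F : 'rV[R]_n -> 'rV[R]_n) :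
  \sum_(w <- [fset chi R S | S in enum C]) F w = \sum_(S in C) F (chi R S).
Proof.
rewrite big_imfset /=; last by move=> x y _ _; apply: chi_inj.
by rewrite undup_id ?enum_uniq // big_enum.
Qed.

Lemma sum_fsep (Z : {fset 'rV[R]_n}) (P : pred _) (F : 'rV[R]_n -> 'rV[R]_n) :
  \sum_(w <- [fset w in Z | P w]) F w = \sum_(w <- Z | P w) F w.
Proof. by rewrite big_fset. Qed.

Lemma exmin (s : seq 'rV[R]_n) (P : pred 'rV[R]_n) (f : 'rV[R]_n -> R) :
  has P s -> exists x, [/\ x \in s, P x & forall y, y \in s -> P y -> f x <= f y].
Proof.
elim: s => //= a s IH /orP [Pa|hs].
  case hs: (has P s).
    have [x [xs Px mx]] := IH hs.
    case: (leP (f a) (f x)) => h.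
      exists a; split; rewrite ?inE ?eqxx //= => y; rewrite inE => /orP [/eqP->//|ys Py].
      exact: le_trans h (mx _ ys Py).
    exists x; split; rewrite ?inE ?xs ?orbT //= => y; rewrite inE => /orP [/eqP->//|ys Py].
      by move=> _; apply: ltW.
    exact: mx.
  exists a; split; rewrite ?inE ?eqxx //= => y; rewrite inE => /orP [/eqP->//|ys Py].
  by move/hasPn: hs => /(_ _ ys); rewrite Py.
have [x [xs Px mx]] := IH hs.
case Pa: (P a).
  case: (leP (f a) (f x)) => h.
    exists a; split; rewrite ?inE ?eqxx //= => y; rewrite inE => /orP [/eqP->//|ys Py].
    exact: le_trans h (mx _ ys Py).
  exists x; split; rewrite ?inE ?xs ?orbT //= => y; rewrite inE => /orP [/eqP->//|ys Py].
    by move=> _; apply: ltW.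
  exact: mx.
exists x; split; rewrite ?inE ?xs ?orbT //= => y; rewrite inE => /orP [/eqP->|ys Py].
  by rewrite Pa.
exact: mx.
Qed.

Lemma pivot (Z : {fset 'rV[R]_n}) (d c : 'rV[R]_n -> R) v :
  (forall w, w \in Z -> 0 < d w) -> \sum_(w <- Z) d w *: w = v ->
  \sum_(w <- Z) c w *: w = 0 -> (exists2 w0, w0 \in Z & 0 < c w0) ->
  exists Z' d', [/\ Z' `<` Z, (forall w, w \in Z' -> 0 < d' w)
     & \sum_(w <- Z') d' w *: w = v].
Proof.
move=> dpos dsum csum [w0 w0Z cw0].
have hP : has (fun w => 0 < c w) Z by apply/hasP; exists w0.
have [w1 [w1Z cw1 mn]] := @exmin _ _ (fun w => d w / c w) hP.
set t := d w1 / c w1.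
have t0 : 0 < t by rewrite divr_gt0 ?dpos.
pose d' w := d w - t * c w.
have d'ge w : w \in Z -> 0 <= d' w.
  move=> wZ; rewrite /d' subr_ge0; case: (ltP 0 (c w)) => cw.
    by rewrite -ler_pdivlMr //; apply: mn.
  apply: le_trans (ltW (dpos _ wZ)).
  by rewrite mulr_ge0_le0 // ltW.
have d'1 : d' w1 = 0.
  by rewrite /d' /t mulrVK ?subrr // unitfE gt_eqF.
exists [fset w in Z | 0 < d' w], d'; split.
- rewrite fproperEneq; apply/andP; split.
    apply/negP => /eqP e; have : w1 \in [fset w in Z | 0 < d' w] by rewrite e.
    by rewrite !inE /= d'1 ltxx andbF.
  by apply/fsubsetP => w; rewrite !inE => /andP[].
- by move=> w; rewrite !inE => /andP[].
rewrite sum_fsep -big_filter.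
rewrite [in RHS](_ : v = \sum_(w <- Z) d' w *: w); last first.
  rewrite /d'; under eq_bigr do rewrite scalerBl -scalerA.
  by rewrite sumrB -scaler_sumr csum scaler0 subr0.
rewrite big_filter big_mkcond /= big_seq [in RHS]big_seq; apply: eq_bigr => w wZ.
case: ifP => // h.
have : d' w = 0 by apply/eqP; rewrite eq_le d'ge // andbT leNgt h.
by move->; rewrite scale0r.
Qed.

Lemma span0 C : in_span C (0 : 'rV[R]_n).
Proof. by exists (fun _ => 0); rewrite big1 // => S _; rewrite scale0r. Qed.
Lemma spanD C (u v : 'rV[R]_n) : in_span C u -> in_span C v -> in_span C (u + v).
Proof.
move=> [a ->] [b ->]; exists (fun S => (a S + b S)%R).
by rewrite -big_split; apply: eq_bigr => S _; rewrite scalerDl.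
Qed.
Lemma spanZ C k (v : 'rV[R]_n) : in_span C v -> in_span C (k *: v).
Proof.
move=> [a ->]; exists (fun S => (k * a S)%R).
by rewrite scaler_sumr; apply: eq_bigr => S _; rewrite scalerA.
Qed.
Lemma spanchi C T : T \in C -> in_span C (chi R T).
Proof.
move=> TC; exists (fun S => if S == T then 1 else 0).
rewrite (bigD1 T) //= eqxx scale1r big1 ?addr0 // => S /andP[_ /negbTE ->].
by rewrite scale0r.
Qed.
Lemma span_sum C (I : finType) (P : pred I) (F : I -> 'rV[R]_n) :
  (forall i, P i -> in_span C (F i)) -> in_span C (\sum_(i | P i) F i).
Proof.
move=> h; elim/big_rec: _ => [|i x Pi hx]; first exact: span0.
exact: spanD (h _ Pi) hx.
Qed.

Lemma orth_exists C (z : 'rV[R]_n) : ~ in_span C z ->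
  exists y : 'rV[R]_n, in_orth_compl C y /\ dotv z y != 0.
Proof.
move=> nz.
pose W := (\sum_(S in C) <<chi R S>>)%MS.
pose K := cokermx W.
have hS S : S \in C -> chi R S *m K = 0.
  move=> SC; apply/eqP; rewrite -submxE.
  by apply: (sumsmx_sup S) => //; rewrite genmxE.
have zK : z *m K != 0.
  rewrite -submxE; apply/negP => /sub_sumsmxP [u ze]; apply: nz.
  rewrite ze; apply: span_sum => S SC.
  have /sub_rVP [a ->] : (u S *m <<chi R S>> <= chi R S)%MS.
    by rewrite -(genmxE (chi R S)) submxMl.
  by apply: spanZ; apply: spanchi.
have [j hj] : exists j, (z *m K) 0 j != 0.
  case/boolP: [exists j, (z *m K) 0 j != 0] => [/existsP//|/existsPn h].
  case/negP: zK; apply/eqP/matrixP => i k.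
  by rewrite ord1; move: (h k); rewrite negbK => /eqP ->; rewrite mxE.
have dotE x : dotv x (\row_i K i j) = (x *m K) 0 j.
  by rewrite /dotv mxE; apply: eq_bigr => i _; rewrite mxE.
exists (\row_i K i j); split; last by rewrite dotE.
move=> v [lam ->]; rewrite dotE mulmx_suml summxE big1 // => S SC.
by rewrite -scalemxAl hS ?scaler0 ?mxE.
Qed.
End S.

Theorem proposition6p2 (R : realFieldType) (n : nat)
  (B : {set {set 'I_n}}) (S' : {set 'I_n}) (z : 'rV[R]_n) :
  minimal_balanced_coll R B -> S' \in B ->
  nonneg_vec z -> z != chi R S' ->
  (forall i, (0 < z 0 i) <-> (i \in S')) ->
  minimal_balanced_set
    ([fset chi R S | S in enum (B :\ S')] `|` [fset z]) ->
  (exists y : 'rV[R]_n, in_orth_compl (B :\ S') y /\ dotv z y != 0) /\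
  in_span B z.
Proof.
move=> [[Bne [lam [lampos lamsum]]] _] S'B znn zne zsupp [[Zok [del [delpos delsum]]] Zmin].
set C := B :\ S' in Zmin Zok delpos delsum *.
set Zc := [fset chi R S | S in enum C] in Zmin Zok delpos delsum *.
have CB S : S \in C -> S \in B by rewrite in_setD1 => /andP[].
have zNZc : z \notin Zc.
  apply/negP => /imfsetP [S /=]; rewrite mem_enum => SC ze.
  move: SC; rewrite in_setD1 => /andP [SS' _]; move/negP: SS'; apply; apply/eqP.
  apply/setP => i; apply/idP/idP => hi.
    have := hi; rewrite -(zsupp i) ze mxE.
    by case: (i \in S) => //; rewrite ltxx.
  move/zsupp: hi; rewrite ze mxE.
  by case: (i \in S) => //; rewrite ltxx.
have chiZc S : S \in C -> chi R S \in Zc.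
  by move=> SC; apply/imfsetP; exists S => //=; rewrite mem_enum.
have sumZ (F : 'rV[R]_n -> 'rV[R]_n) :
    \sum_(w <- Zc `|` [fset z]) F w = (F z + \sum_(S in C) F (chi R S))%R.
  by rewrite fsetUC big_fsetU1 // sum_imchi.
have zspan : in_span B z.
  move: delsum; rewrite sumZ => e.
  have dz0 : del z != 0 by rewrite gt_eqF // delpos // !inE eqxx orbT.
  have -> : z = (del z)^-1 *: (chi R setT + (-1) *: \sum_(S in C) del (chi R S) *: chi R S)%R.
    by rewrite -e scaleN1r addrK scalerA mulVf // scale1r.
  apply: spanZ; apply: spanD; first by exists lam.
  apply: spanZ; apply: span_sum => S SC; apply: spanZ; apply: spanchi; exact: CB.
split => //.
apply: orth_exists => -[mu zmu].
pose c (w : 'rV[R]_n) : R :=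
  if w == z then 1 else - mu (odflt set0 [pick S | chi R S == w]).
have cchi S : S \in C -> c (chi R S) = - mu S.
  move=> SC; rewrite /c; case: eqP => [e|_].
    by move: zNZc; rewrite -e chiZc.
  by case: pickP => [T /eqP/chi_inj -> //|/(_ S)]; rewrite eqxx.
have csum : \sum_(w <- Zc `|` [fset z]) c w *: w = 0.
  have cz : c z = 1 by rewrite /c eqxx.
  rewrite sumZ cz scale1r.
  rewrite (eq_bigr (fun S => - (mu S *: chi R S))); last first.
    by move=> S SC; rewrite cchi // scaleNr.
  by rewrite sumrN -zmu subrr.
have zZ : z \in Zc `|` [fset z] by rewrite !inE eqxx orbT.
have cz : 0 < c z by rewrite /c eqxx ltr01.
have [Z' [d' [pZ d'pos d'sum]]] := @pivot R n _ _ _ _ delpos delsum csum (ex_intro2 _ _ z zZ cz).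
apply: (Zmin Z' pZ); split; last by exists d'.
by move=> w wZ; apply: Zok; move/fproper_sub/fsubsetP: pZ; apply.
Qed.
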